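(* Let $(X,\tau)$ be a $\mathbb{B}$-topological space and $\gamma$ a closed set of $(X,\tau)$. Then $\gamma$ is irreducible if and only if $\gamma[tt]$ is an irreducible closed subset of the topological space $(X,\tau[tt])$ and $\gamma[ff]$ is an irreducible closed subset of the topological space $(X,\tau[ff])$.
   Context: $\mathbb{B}=\{0,1,tt,ff\}$ is the four-element Boolean algebra with bottom $0$, top $1$, and $tt,ff$ incomparable and complements of each other; $\neg$ is its complement and $a\to b=\neg a\vee b$. $\mathbb{B}^X$ is the set of maps $X\to\mathbb{B}$ with pointwise order and operations; $b_X$ is the constant map with value $b$; $\lambda[b]=\{x\in X:\lambda(x)\ge b\}$. A $\mathbb{B}$-topology on $X$ is a subset $\tau\subseteq\mathbb{B}^X$ containing all constant maps and closed under arbitrary pointwise joins and finite pointwise meets; $\tau[tt]=\{\lambda[tt]:\lambda\in\tau\}$ and $\tau[ff]=\{\lambda[ff]:\lambda\in\tau\}$ are topologies. $\gamma\in\mathbb{B}^X$ is closed if $\neg\gamma\in\tau$. $\mathrm{sub}_X(\lambda,\mu)=\bigwedge_{x\in X}(\lambda(x)\to\mu(x))$. A closed set $\gamma$ is irreducible if (i) $\mathrm{sub}_X(\gamma,b_X)=b$ for all $b\in\mathbb{B}$, and (ii) $\mathrm{sub}_X(\gamma,\mu_1\vee\mu_2)=\mathrm{sub}_X(\gamma,\mu_1)\vee\mathrm{sub}_X(\gamma,\mu_2)$ for all closed sets $\mu_1,\mu_2$. An irreducible closed subset of a topological space is a nonempty closed set not contained in the union of two closed sets unless it is contained in one of them.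 *)

(* Defs.v *)
From Stdlib Require Import Classical ClassicalEpsilon.

Inductive B4 : Type := B0 | B1 | Btt | Bff.

Definition leB (a b : B4) : bool :=
  match a, b with
  | B0, _ => true
  | _, B1 => true
  | Btt, Btt => true
  | Bff, Bff => true
  | _, _ => false
  end.

Definition joinB (a b : B4) : B4 :=
  match a, b with
  | B0, c => c
  | c, B0 => c
  | B1, _ => B1
  | _, B1 => B1
  | Btt, Btt => Btt
  | Bff, Bff => Bff
  | _, _ => B1
  end.

Definition meetB (a b : B4) : B4 :=
  match a, b with
  | B1, c => c
  | c, B1 => c
  | B0, _ => B0
  | _, B0 => B0
  | Btt, Btt => Btt
  | Bff, Bff => Bff
  | _, _ => B0
  end.

Definition negB (a : B4) : B4 :=
  match a with B0 => B1 | B1 => B0 | Btt => Bff | Bff => Btt end.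

Definition impB (a b : B4) : B4 := joinB (negB a) b.

Definition is_lubB (S : B4 -> Prop) (c : B4) : Prop :=
  (forall b, S b -> leB b c = true) /\
  (forall d, (forall b, S b -> leB b d = true) -> leB c d = true).
Definition is_glbB (S : B4 -> Prop) (c : B4) : Prop :=
  (forall b, S b -> leB c b = true) /\
  (forall d, (forall b, S b -> leB d b = true) -> leB d c = true).

(* arbitrary join and meet in B (they exist since B is a complete lattice) *)
Definition supB (S : B4 -> Prop) : B4 := epsilon (inhabits B0) (is_lubB S).
Definition infB (S : B4 -> Prop) : B4 := epsilon (inhabits B0) (is_glbB S).

(* B-topology on X: contains constants, closed under arbitrary pointwise
   joins and finite (binary; the empty meet is the constant 1) pointwise meets *)
Definition is_Btopology {X : Type} (tau : (X -> B4) -> Prop) : Prop :=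
  (forall b : B4, tau (fun _ => b)) /\
  (forall F : (X -> B4) -> Prop, (forall l, F l -> tau l) ->
     tau (fun x => supB (fun b => exists l, F l /\ l x = b))) /\
  (forall l m, tau l -> tau m -> tau (fun x => meetB (l x) (m x))).

Definition cut {X : Type} (l : X -> B4) (b : B4) : X -> Prop :=
  fun x => leB b (l x) = true.

Definition tau_cut {X : Type} (tau : (X -> B4) -> Prop) (b : B4)
  : (X -> Prop) -> Prop :=
  fun U => exists l, tau l /\ (forall x, U x <-> cut l b x).

Definition Bclosed {X : Type} (tau : (X -> B4) -> Prop) (g : X -> B4) : Prop :=
  tau (fun x => negB (g x)).

Definition subX {X : Type} (l m : X -> B4) : B4 :=
  infB (fun b => exists x, impB (l x) (m x) = b).

Definition Birreducible {X : Type} (tau : (X -> B4) -> Prop) (g : X -> B4) : Prop :=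
  Bclosed tau g /\
  (forall b : B4, subX g (fun _ => b) = b) /\
  (forall m1 m2, Bclosed tau m1 -> Bclosed tau m2 ->
     subX g (fun x => joinB (m1 x) (m2 x)) = joinB (subX g m1) (subX g m2)).

(* ordinary topological spaces given by their family of open sets *)
Definition top_closed {X : Type} (O : (X -> Prop) -> Prop) (C : X -> Prop) : Prop :=
  O (fun x => ~ C x).

Definition irreducible_closed {X : Type} (O : (X -> Prop) -> Prop) (C : X -> Prop)
  : Prop :=
  top_closed O C /\ (exists x, C x) /\
  (forall A B, top_closed O A -> top_closed O B ->
     (forall x, C x -> A x \/ B x) ->
     (forall x, C x -> A x) \/ (forall x, C x -> B x)).

(* Main.v *)
Require Import Defs.
From Stdlib Require Import Classical ClassicalEpsilon FunctionalExtensionality Bool.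

Definition isC (c : B4) : Prop := c = Btt \/ c = Bff.

Lemma negP c a : isC c -> leB c (negB a) = negb (leB c a).
Proof. intros [-> | ->]; destruct a; reflexivity. Qed.

Lemma joinP c a b : isC c -> leB c (joinB a b) = leB c a || leB c b.
Proof. intros [-> | ->]; destruct a, b; reflexivity. Qed.

Lemma impP c a b : isC c -> leB c (impB a b) = implb (leB c a) (leB c b).
Proof. intros [-> | ->]; destruct a, b; reflexivity. Qed.

Lemma B_ext a b : leB Btt a = leB Btt b -> leB Bff a = leB Bff b -> a = b.
Proof. destruct a, b; simpl; congruence. Qed.

Lemma bool_iff (x y : bool) : (x = true <-> y = true) -> x = y.
Proof. destruct x, y; intuition congruence. Qed.

Lemma leB_iff a b : leB a b = true <->
  ((leB Btt a = true -> leB Btt b = true) /\ (leB Bff a = true -> leB Bff b = true)).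
Proof. destruct a, b; simpl; intuition congruence. Qed.

Lemma glb_char S c k : isC k -> is_glbB S c ->
  (leB k c = true <-> forall b, S b -> leB k b = true).
Proof.
  intros Hk [H1 H2]; split.
  - intros Hc b Sb. specialize (H1 b Sb). apply leB_iff in H1.
    destruct Hk as [-> | ->]; tauto.
  - intros H. assert (leB k k = true) by (destruct Hk as [-> | ->]; reflexivity).
    assert (Hl : leB k c = true).
    { apply H2. intros b Sb. exact (H b Sb). }
    exact Hl.
Qed.

Lemma mk_elem (P Q : Prop) : exists c, (leB Btt c = true <-> P) /\ (leB Bff c = true <-> Q).
Proof.
  destruct (classic P) as [HP|HP]; destruct (classic Q) as [HQ|HQ].
  - exists B1; simpl; tauto.
  - exists Btt; simpl; intuition congruence.
  - exists Bff; simpl; intuition congruence.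
  - exists B0; simpl; intuition congruence.
Qed.

Lemma glb_exists S : exists c, is_glbB S c.
Proof.
  destruct (mk_elem (forall b, S b -> leB Btt b = true) (forall b, S b -> leB Bff b = true))
    as [c [Ht Hf]].
  exists c; split.
  - intros b Sb. apply leB_iff. split; intro H.
    + apply Ht; auto.
    + apply Hf; auto.
  - intros d Hd. apply leB_iff. split; intro H.
    + apply Ht. intros b Sb. specialize (Hd b Sb). apply leB_iff in Hd. tauto.
    + apply Hf. intros b Sb. specialize (Hd b Sb). apply leB_iff in Hd. tauto.
Qed.

Lemma infB_spec S : is_glbB S (infB S).
Proof.
  unfold infB. apply epsilon_spec. apply glb_exists.
Qed.

Lemma subX_P {X} c (g m : X -> B4) : isC c ->
  (leB c (subX g m) = true <-> forall x, leB c (g x) = true -> leB c (m x) = true).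
Proof.
  intros Hc. unfold subX. rewrite (glb_char _ _ c Hc (infB_spec _)).
  split.
  - intros H x Hg. specialize (H _ (ex_intro _ x eq_refl)).
    rewrite impP in H by exact Hc. rewrite Hg in H. exact H.
  - intros H b [x <-]. rewrite impP by exact Hc.
    destruct (leB c (g x)) eqn:E; simpl; auto.
Qed.

Lemma isCtt : isC Btt. Proof. left; reflexivity. Qed.
Lemma isCff : isC Bff. Proof. right; reflexivity. Qed.

Lemma comp_closed {X} (tau : (X -> B4) -> Prop) g c : isC c -> Bclosed tau g ->
  top_closed (tau_cut tau c) (cut g c).
Proof.
  intros Hc Hg. exists (fun x => negB (g x)). split; [exact Hg|].
  intro x. unfold cut. rewrite negP by exact Hc.
  destruct (leB c (g x)); simpl; intuition congruence.
Qed.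

Lemma part_i {X} (g : X -> B4) :
  (forall b, subX g (fun _ => b) = b) <-> (exists x, cut g Btt x) /\ (exists x, cut g Bff x).
Proof.
  split.
  - intros H.
    assert (forall c, isC c -> exists x, cut g c x).
    { intros c Hc. apply NNPP. intro Hn.
      assert (leB c (subX g (fun _ => B0)) = true).
      { apply subX_P; auto. intros x Hx. exfalso; apply Hn; exists x; exact Hx. }
      rewrite H in H0. destruct Hc as [-> | ->]; discriminate. }
    split; apply H0; [apply isCtt | apply isCff].
  - intros [[x1 H1] [x2 H2]] b.
    assert (forall c x, isC c -> cut g c x -> leB c (subX g (fun _ => b)) = leB c b).
    { intros c x Hc Hx. apply bool_iff. rewrite subX_P by exact Hc. split.
      + intros H. apply H with x. exact Hx.
      + intros H y _. exact H. }
    apply B_ext; [apply (H Btt x1 isCtt H1) | apply (H Bff x2 isCff H2)].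
Qed.

Lemma fwd_irr {X} (tau : (X -> B4) -> Prop) g c : isC c ->
  (forall m1 m2, Bclosed tau m1 -> Bclosed tau m2 ->
     subX g (fun x => joinB (m1 x) (m2 x)) = joinB (subX g m1) (subX g m2)) ->
  forall A B, top_closed (tau_cut tau c) A -> top_closed (tau_cut tau c) B ->
     (forall x, cut g c x -> A x \/ B x) ->
     (forall x, cut g c x -> A x) \/ (forall x, cut g c x -> B x).
Proof.
  intros Hc H A B [l1 [Hl1 E1]] [l2 [Hl2 E2]] Hcov.
  set (m1 := fun x => negB (l1 x)). set (m2 := fun x => negB (l2 x)).
  assert (C1 : Bclosed tau m1).
  { unfold Bclosed, m1. replace (fun x => negB (negB (l1 x))) with l1; auto.
    apply functional_extensionality; intro x; destruct (l1 x); reflexivity. }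
  assert (C2 : Bclosed tau m2).
  { unfold Bclosed, m2. replace (fun x => negB (negB (l2 x))) with l2; auto.
    apply functional_extensionality; intro x; destruct (l2 x); reflexivity. }
  assert (A1 : forall x, leB c (m1 x) = true <-> A x).
  { intro x. unfold m1. rewrite negP by exact Hc. specialize (E1 x). unfold cut in E1.
    destruct (leB c (l1 x)); simpl; split; intro HH.
    - discriminate.
    - exfalso; apply (proj2 E1 eq_refl); exact HH.
    - apply NNPP; intro HA; apply E1 in HA; discriminate.
    - reflexivity. }
  assert (A2 : forall x, leB c (m2 x) = true <-> B x).
  { intro x. unfold m2. rewrite negP by exact Hc. specialize (E2 x). unfold cut in E2.
    destruct (leB c (l2 x)); simpl; split; intro HH.
    - discriminate.
    - exfalso; apply (proj2 E2 eq_refl); exact HH.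
    - apply NNPP; intro HA; apply E2 in HA; discriminate.
    - reflexivity. }
  specialize (H m1 m2 C1 C2).
  assert (leB c (subX g (fun x => joinB (m1 x) (m2 x))) = true).
  { apply subX_P; auto. intros x Hx. rewrite joinP by exact Hc.
    apply orb_true_iff. destruct (Hcov x Hx); [left; apply A1 | right; apply A2]; auto. }
  rewrite H, joinP in H0 by exact Hc. apply orb_true_iff in H0.
  destruct H0 as [H0|H0]; rewrite subX_P in H0 by exact Hc; [left|right];
    intros x Hx; [apply A1 | apply A2]; auto.
Qed.

Lemma bwd_irr_c {X} (tau : (X -> B4) -> Prop) (g : X -> B4) c m1 m2 : isC c ->
  Bclosed tau m1 -> Bclosed tau m2 ->
  (forall A B, top_closed (tau_cut tau c) A -> top_closed (tau_cut tau c) B ->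
     (forall x, cut g c x -> A x \/ B x) ->
     (forall x, cut g c x -> A x) \/ (forall x, cut g c x -> B x)) ->
  leB c (subX g (fun x => joinB (m1 x) (m2 x))) = leB c (joinB (subX g m1) (subX g m2)).
Proof.
  intros Hc C1 C2 H. apply bool_iff. rewrite joinP, orb_true_iff, !subX_P by exact Hc.
  split.
  - intros Hj.
    destruct (H (cut m1 c) (cut m2 c) (comp_closed tau m1 c Hc C1) (comp_closed tau m2 c Hc C2))
      as [H1|H1].
    + intros x Hx. specialize (Hj x Hx). rewrite joinP in Hj by exact Hc.
      apply orb_true_iff in Hj. exact Hj.
    + left; exact H1.
    + right; exact H1.
  - intros [H1|H1] x Hx; rewrite joinP by exact Hc; apply orb_true_iff; auto.
Qed.

Theorem mainTheorem6 (X : Type) (tau : (X -> B4) -> Prop) (g : X -> B4) :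
  is_Btopology tau -> Bclosed tau g ->
  (Birreducible tau g <->
   irreducible_closed (tau_cut tau Btt) (cut g Btt) /\
   irreducible_closed (tau_cut tau Bff) (cut g Bff)).
Proof.
  intros _ Hg. split.
  - intros [_ [Hi Hii]]. apply part_i in Hi. destruct Hi as [E1 E2].
    split; (split; [apply comp_closed; auto; (apply isCtt || apply isCff) | split]); auto;
      apply (fwd_irr tau); auto; (apply isCtt || apply isCff).
  - intros [[_ [E1 I1]] [_ [E2 I2]]]. split; [exact Hg | split].
    + apply part_i; auto.
    + intros m1 m2 C1 C2. apply B_ext.
      * apply (bwd_irr_c tau); auto. apply isCtt.
      * apply (bwd_irr_c tau); auto. apply isCff.
Qed.
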